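(* Let $G$ be a graph, let $s\ge3$ be an integer, and let $xTy$ be a thread of $G$ (possibly $x=y$, when $T$ is a cycle-thread). Let $T'$ be the path obtained from $T$ by deleting its end-vertices $x,y$ (for a cycle-thread, by deleting the single vertex $x=y$), and let $G'=G-V(T')$. Then: (a1) if $s\ge4$ and $e(T)\ge 4$, then $\lambda(G')\ge v(G')/(s+1)$ implies $\lambda(G)\ge v(G)/(s+1)$; (a2) if $s=3$ and $v(T')\in\{3m,3m+1\}$ for some integer $m\ge1$, then $\lambda(G')\ge v(G')/4$ implies $\lambda(G)\ge v(G)/4$.
   Context: All graphs are finite and simple. $v(G)$, $e(G)$ are the numbers of vertices and edges. $\lambda(G)$ denotes the maximum number of pairwise vertex-disjoint subgraphs of $G$ each of which is a path with exactly two edges. A path-thread of $G$ is a path $P$ in $G$, maximal under inclusion among paths, such that every internal vertex of $P$ has degree $2$ in $G$; its end-vertices are $x,y$, written $xPy$. A cycle-thread of $G$ is a cycle $C$ of $G$ in which all vertices except exactly one have degree $2$ in $G$; both ''end-vertices'' $x=y$ of it are this exceptional vertex. A thread is a path-thread or a cycle-thread. *)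

(* Defs.v *)
(* A graph G is given by a finite type T, a symmetric
   irreflexive adjacency relation e : rel T, and a vertex set V : {set T};
   G is the subgraph of (T,e) induced on V. *)
From mathcomp Require Import all_boot.
Set Implicit Arguments. Unset Strict Implicit. Unset Printing Implicit Defensive.

Section Graphs.
Variables (T : finType) (e : rel T).

Definition deg (V : {set T}) (x : T) : nat := #|[set y in V | e x y]|.

Definition gpath (V : {set T}) (p : seq T) : bool :=
  match p with
  | [::] => false
  | x :: q => [&& path e x q, uniq p & all (fun v => v \in V) p]
  end.

Definition path_interior (p : seq T) : seq T := drop 1 (take (size p).-1 p).

Definition deg2_path (V : {set T}) (p : seq T) : bool :=
  gpath V p && all (fun v => deg V v == 2) (path_interior p).

(* path-thread: a deg2_path maximal under inclusion among such paths
   (a path contained in a path is a contiguous segment of it, read in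
   one of the two directions) *)
Definition path_thread (V : {set T}) (p : seq T) : Prop :=
  deg2_path V p /\
  forall q, deg2_path V q -> infix p q || infix (rev p) q -> size q <= size p.

(* cycle-thread, given as x :: q where x is the exceptional vertex:
   x :: q is a cycle of G (at least 3 vertices, consecutive vertices and
   last/first adjacent), deg x <> 2 and every other vertex has degree 2 *)
Definition cycle_thread (V : {set T}) (c : seq T) : Prop :=
  match c with
  | [::] => False
  | x :: q => [/\ 3 <= size c, gpath V c, e (last x q) x,
                 deg V x != 2 & all (fun v => deg V v == 2) q]
  end.

Definition thread (V : {set T}) (t : seq T) (b : bool) : Prop :=
  if b then cycle_thread V t else path_thread V t.

Definition thread_interior (t : seq T) (b : bool) : seq T :=
  if b then behead t else path_interior t.

Definition thread_edges (t : seq T) (b : bool) : nat :=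
  if b then size t else (size t).-1.

Definition del_interior (V : {set T}) (t : seq T) (b : bool) : {set T} :=
  V :\: [set v in thread_interior t b].

(* lambda(G): maximum number of pairwise vertex-disjoint 2-edge paths *)
Definition is_P3 (V : {set T}) (t : T * T * T) : bool :=
  [&& t.1.1 \in V, t.1.2 \in V, t.2 \in V, t.1.1 != t.2,
      e t.1.1 t.1.2 & e t.1.2 t.2].

Definition p3verts (t : T * T * T) : {set T} := [set t.1.1; t.1.2; t.2].

Definition p3packing (V : {set T}) (P : {set T * T * T}) : bool :=
  [forall t in P, is_P3 V t] &&
  [forall t in P, forall u in P, (t != u) ==> [disjoint p3verts t & p3verts u]].

Definition lambda (V : {set T}) : nat :=
  \max_(P : {set T * T * T} | p3packing V P) #|P|.

End Graphs.

(* Main.v *)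
Require Import Defs.
From mathcomp Require Import all_boot zify.

Section H.
Variables (T : finType) (e : rel T).

Lemma chunk_pack (V : {set T}) n : forall p : seq T, size p <= n ->
  sorted e p -> uniq p -> all (fun v => v \in V) p ->
  exists Q : {set T * T * T}, [/\ p3packing e V Q, #|Q| = size p %/ 3 &
     forall t, t \in Q -> p3verts t \subset [set v in p]].
Proof.
elim: n => [|n IH] p.
  case: p => // _ _ _ _; exists set0; split => //.
    by apply/andP; split; apply/forallP => t; rewrite inE.
  by rewrite cards0.
  by move=> t; rewrite inE.
case: p => [|a [|b [|c r]]] Hs Hso Hu Ha.
- exists set0; split => //; last by move=> t; rewrite inE.
  by apply/andP; split; apply/forallP => t; rewrite inE.
  by rewrite cards0.
- exists set0; split => //; last by move=> t; rewrite inE.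
  by apply/andP; split; apply/forallP => t; rewrite inE.
  by rewrite cards0.
- exists set0; split => //; last by move=> t; rewrite inE.
  by apply/andP; split; apply/forallP => t; rewrite inE.
  by rewrite cards0.
move: Hso => /= /andP [eab /andP [ebc Hp]].
have Hsr : sorted e r by apply: path_sorted Hp.
move: Hu => /= /andP [ha /andP [hb /andP [hc Hur]]].
move: Ha => /= /andP [aV /andP [bV /andP [cV Har]]].
have [|Q [QP QC Qv]] := IH r _ Hsr Hur Har; first by move: Hs => /= /ltnW /ltnW; rewrite ltnS.
have nr : forall v, v \in r -> v \notin [set a; b; c].
  move=> v vr; rewrite !inE; apply/negP => /orP [/orP[]|] /eqP ?; subst v.
  - by move: ha; rewrite !inE vr !orbT.
  - by move: hb; rewrite !inE vr !orbT.
  - by rewrite vr in hc.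
have tQ : (a, b, c) \notin Q.
  apply/negP => /Qv /subsetP /(_ a); rewrite /p3verts !inE eqxx /= => /(_ isT) ar.
  by move: ha; rewrite !inE ar !orbT.
have disj : forall u, u \in Q -> [disjoint p3verts (a,b,c) & p3verts u].
  move=> u uQ; rewrite disjoint_sym disjoint_subset; apply/subsetP => v vu.
  move: (subsetP (Qv u uQ) v vu); rewrite inE => /nr; by rewrite /p3verts /= !inE.
move: QP => /andP [QP1 QP2].
have QP1' : forall t, (t \in Q) ==> is_P3 e V t by apply/forallP.
have QP2' : forall t u, t \in Q -> u \in Q -> (t != u) ==> [disjoint p3verts t & p3verts u].
  move=> t u tQ' uQ; move: (forallP QP2 t); rewrite tQ' /= => /forallP /(_ u).
  by rewrite uQ.
exists ((a, b, c) |: Q); split.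
- apply/andP; split; apply/forallP => t; apply/implyP; rewrite in_setU1 => /orP [/eqP -> | tQ'].
  + rewrite /is_P3 /= aV bV cV eab ebc /= andbT.
    apply/eqP => ac; subst c; move: ha; rewrite !inE eqxx !orbT; done.
  + by move: (QP1' t); rewrite tQ'.
  + apply/forallP => u; apply/implyP; rewrite in_setU1 => /orP [/eqP -> | uQ].
    * by rewrite eqxx.
    * apply/implyP => _; exact: (disj u uQ).
  + apply/forallP => u; apply/implyP; rewrite in_setU1 => /orP [/eqP -> | uQ].
    * apply/implyP => _; rewrite disjoint_sym; exact: (disj t tQ').
    * exact: QP2'.
- rewrite cardsU1 tQ QC /=.
  have -> : (size r).+3 = size r + 1 * 3 by rewrite mul1n addnC.
  by rewrite divnDMl // addnC.
- move=> t; rewrite in_setU1 => /orP [/eqP -> | tQ'].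
  + by apply/subsetP => v; rewrite /p3verts !inE => /orP [/orP []|] ->; rewrite ?orbT.
  + apply/subsetP => v /(subsetP (Qv t tQ')); rewrite !inE => ->; by rewrite !orbT.
Qed.

Lemma verts_in (W : {set T}) t : is_P3 e W t -> p3verts t \subset W.
Proof.
case/and5P => h1 h2 h3 _ _; apply/subsetP => v.
by rewrite /p3verts !inE => /orP [/orP []|] /eqP ->.
Qed.

Lemma pack_union (V S : {set T}) (P Q : {set T * T * T}) :
  p3packing e (V :\: S) P -> p3packing e V Q ->
  (forall t, t \in Q -> p3verts t \subset S) ->
  p3packing e V (P :|: Q) /\ #|P :|: Q| = #|P| + #|Q|.
Proof.
move=> /andP [P1 P2] /andP [Q1 Q2] QS.
have P1' : forall t, t \in P -> is_P3 e (V :\: S) t.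
  by move=> t tP; move: (forallP P1 t); rewrite tP.
have Q1' : forall t, t \in Q -> is_P3 e V t.
  by move=> t tQ; move: (forallP Q1 t); rewrite tQ.
have P2' : forall t u, t \in P -> u \in P -> (t != u) ==> [disjoint p3verts t & p3verts u].
  move=> t u tP uP; move: (forallP P2 t); rewrite tP /= => /forallP /(_ u).
  by rewrite uP.
have Q2' : forall t u, t \in Q -> u \in Q -> (t != u) ==> [disjoint p3verts t & p3verts u].
  move=> t u tP uP; move: (forallP Q2 t); rewrite tP /= => /forallP /(_ u).
  by rewrite uP.
have cross : forall t u, t \in P -> u \in Q -> [disjoint p3verts t & p3verts u].
  move=> t u tP uQ; rewrite disjoint_subset; apply/subsetP => v vt.
  have := subsetP (verts_in _ _ (P1' t tP)) v vt; rewrite in_setD => /andP [vS _].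
  have vu' : v \notin p3verts u by apply/negP => vu; rewrite (subsetP (QS u uQ) v vu) in vS.
  exact: vu'.
have P3W : forall t, is_P3 e (V :\: S) t -> is_P3 e V t.
  move=> t /and5P [h1 h2 h3 h4 h5]; apply/and5P; split => //;
  by move: h1 h2 h3; rewrite !inE => /andP [_ ?] /andP [_ ?] /andP [_ ?].
split.
- apply/andP; split; apply/forallP => t; apply/implyP; rewrite inE => /orP [tP | tQ].
  + exact: P3W (P1' t tP).
  + exact: Q1' t tQ.
  + apply/forallP => u; apply/implyP; rewrite inE => /orP [uP | uQ].
    * exact: P2'.
    * apply/implyP => _; exact: cross.
  + apply/forallP => u; apply/implyP; rewrite inE => /orP [uP | uQ].
    * apply/implyP => _; rewrite disjoint_sym; exact: cross.
    * exact: Q2'.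
- have I0 : P :&: Q = set0.
    apply/setP => t; rewrite !inE; apply/negP => /andP [tP tQ].
    have := cross t t tP tQ; rewrite disjoint_subset => /subsetP /(_ t.1.1).
    rewrite /p3verts !inE eqxx /= => /(_ isT) /negP; apply; done.
  by have := cardsUI P Q; rewrite I0 cards0 addn0.
Qed.

Lemma lam_ge (V : {set T}) P : p3packing e V P -> #|P| <= lambda e V.
Proof. move=> H; exact: (@leq_bigmax_cond _ (p3packing e V) (fun P => #|P|) P H). Qed.

Lemma lam_ex (V : {set T}) : exists P, p3packing e V P /\ #|P| = lambda e V.
Proof.
have H0 : 0 < #|p3packing e V|.
  apply/card_gt0P; exists set0; rewrite unfold_in.
  by apply/andP; split; apply/forallP => t; rewrite inE.
have [P0 HP0 E] := @eq_bigmax_cond _ (p3packing e V) (fun P => #|P|) H0.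
by exists P0; split => //; rewrite /lambda E.
Qed.

End H.
Lemma ar1 k S : 3 <= k -> 4 <= S -> k <= S.+1 * (k %/ 3).
Proof.
move=> hk hS; have h1 : 5 * (k %/ 3) <= S.+1 * (k %/ 3) by apply: leq_mul.
apply: leq_trans h1; lia.
Qed.
Lemma ar2 k : (exists m, 1 <= m /\ (k = 3 * m \/ k = 3 * m + 1)) -> k <= 4 * (k %/ 3).
Proof. case=> m [hm [->|->]]; lia. Qed.
Lemma ar3 x k S l' q l : x <= S * l' -> k <= S * q -> l' + q <= l -> x + k <= S * l.
Proof.
move=> h1 h2 h3; apply: leq_trans (leq_add h1 h2) _; rewrite -mulnDr; exact: leq_mul.
Qed.

Arguments ar1 {k S}.
Arguments ar2 {k}.
Arguments ar3 {x k S l' q l}.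
Arguments chunk_pack {T e V n p}.
Arguments pack_union {T e V S P Q}.
Arguments lam_ge {T e V P}.

Lemma thread_facts (T : finType) (e : rel T) V t b : thread e V t b ->
  [/\ sorted e (thread_interior t b), uniq (thread_interior t b),
      all (fun v => v \in V) (thread_interior t b) &
      (4 <= thread_edges t b -> 3 <= size (thread_interior t b))].
Proof.
case: b; rewrite /thread /thread_interior /thread_edges.
- case: t => [|x q] //= [hs /and3P [hp hu ha] _ _ _].
  move: hu ha => /andP [_ hu] /andP [_ ha].
  split => //; first exact: path_sorted hp.
- rewrite /path_thread /deg2_path; move=> [/andP [hg _] _]; case: t hg => [|x q] // /and3P [hp hu ha].
  rewrite /path_interior; split.
  + by apply: drop_sorted; apply: take_sorted.
  + by apply: drop_uniq; apply: take_uniq.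
  + apply/allP => v /mem_drop /mem_take; exact: (allP ha v).
  + rewrite size_drop size_takel ?leq_pred //= => h.
    by rewrite subn1 -ltnS prednK // (leq_trans _ h).
Qed.

Theorem lemma3p1 (T : finType) (e : rel T) (V : {set T}) (s : nat)
    (t : seq T) (b : bool) :
  symmetric e -> irreflexive e -> 3 <= s -> thread e V t b ->
  let V' := del_interior V t b in
  ((4 <= s -> 4 <= thread_edges t b ->
    #|V'| <= s.+1 * lambda e V' -> #|V| <= s.+1 * lambda e V) /\
   (s = 3 ->
    (exists m, 1 <= m /\ (size (thread_interior t b) = 3 * m \/
                           size (thread_interior t b) = 3 * m + 1)) ->
    #|V'| <= 4 * lambda e V' -> #|V| <= 4 * lambda e V)).
Proof.
move=> _ _ hs3 hth V'.
have [hso hu ha hsz] := @thread_facts _ _ _ _ _ hth.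
set p := thread_interior t b.
set S := [set v in p].
have [Q [QP QC Qv]] := chunk_pack (n := size p) (leqnn _) hso hu ha.
have [P [PP PC]] := @lam_ex _ e V'.
have [UP UC] := pack_union (S := S) PP QP Qv.
have hl : lambda e V' + size p %/ 3 <= lambda e V.
  by rewrite -PC -QC -UC; exact: lam_ge UP.
have hcard : #|V| = #|V'| + size p.
  rewrite /V' /del_interior -/p -/S -(cardsID S V).
  have SV : S \subset V by apply/subsetP => v; rewrite inE => /(allP ha).
  rewrite (setIidPr SV) addnC; congr (_ + _).
  by rewrite cardsE; apply/card_uniqP.
split.
- move=> h4 he h; rewrite hcard; apply: ar3 h _ hl.
  exact: ar1 (hsz he) h4.
- move=> _ hm h; rewrite hcard; apply: ar3 h _ hl.
  exact: ar2.
Qed.
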